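(* Every $n\times n$ Gram-Lorentz matrix $X$ is completely positive semidefinite, and $$\mathrm{cpsd}\text{-}\mathrm{rank}(X)\le 2^{\lfloor(\mathrm{rank}(X)+1)/2\rfloor}.$$
   Context: The $m$-dimensional Lorentz cone is $\mathcal{L}_m:=\{(c,x)\in\mathbb{R}\times\mathbb{R}^{m-1}: c\ge\|x\|\}$. An $n\times n$ real symmetric matrix $X$ is Gram-Lorentz if there exist $m\ge1$ and vectors $\ell_1,\dots,\ell_n\in\mathcal{L}_m$ with $X_{ij}=\langle\ell_i,\ell_j\rangle$ for all $i,j$. An $n\times n$ matrix $X$ is completely positive semidefinite (cpsd) if there exist $d\ge1$ and Hermitian positive semidefinite $d\times d$ matrices $P_1,\dots,P_n$ with $X_{ij}=\mathrm{Tr}(P_iP_j)$ for all $i,j$; the cpsd-rank of $X$ is the least such $d$. *)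

(* Defs.v *)
From mathcomp Require Import all_boot all_order all_algebra.
From mathcomp Require Import reals complex.
Set Implicit Arguments. Unset Strict Implicit. Unset Printing Implicit Defensive.
Import Order.TTheory GRing.Theory Num.Theory.
Local Open Scope ring_scope.

(* The Lorentz cone L_{1+k} = {(c,x) in R x R^k : c >= ||x||}, vectors as
   row vectors of length 1 + k (so the dimension m = 1 + k is >= 1). *)
Definition in_lorentz (R : realType) (k : nat) (l : 'rV[R]_(1 + k)) : Prop :=
  Num.sqrt (\sum_(i < k) (rsubmx l) 0 i ^+ 2) <= (lsubmx l) 0 0.

Definition rdot (R : realType) (m : nat) (u v : 'rV[R]_m) : R :=
  \sum_(i < m) u 0 i * v 0 i.

Definition gram_lorentz (R : realType) (n : nat) (X : 'M[R]_n) : Prop :=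
  exists (k : nat) (l : 'I_n -> 'rV[R]_(1 + k)),
    (forall i, in_lorentz (l i)) /\ (forall i j, X i j = rdot (l i) (l j)).

Definition hermitian_mx (R : realType) (d : nat) (P : 'M[R[i]]_d) : Prop :=
  (map_mx Num.conj P)^T = P.

Definition hpsd_mx (R : realType) (d : nat) (P : 'M[R[i]]_d) : Prop :=
  hermitian_mx P /\
  forall v : 'cV[R[i]]_d, 0 <= ((map_mx Num.conj v)^T *m P *m v) 0 0.

Definition cpsd_factorization (R : realType) (n : nat) (X : 'M[R]_n) (d : nat)
  : Prop :=
  exists P : 'I_n -> 'M[R[i]]_d,
    (forall i, hpsd_mx (P i)) /\
    (forall i j, (X i j)%:C%C = \tr (P i *m P j)).

Definition cpsd (R : realType) (n : nat) (X : 'M[R]_n) : Prop :=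
  exists d, (1 <= d)%N /\ cpsd_factorization X d.

(* Main.v *)
Require Import Defs.
From mathcomp Require Import all_boot all_order all_algebra.
From mathcomp Require Import reals complex.
From mathcomp Require Import zify ring lra.
Set Implicit Arguments. Unset Strict Implicit. Unset Printing Implicit Defensive.
Import Order.TTheory GRing.Theory Num.Theory.
Local Open Scope ring_scope.

Fixpoint dim (k : nat) : nat := match k with 0 => 1%N | k'.+1 => (dim k' + dim k')%N end.

Lemma dimE k : dim k = (2 ^ k)%N.
Proof. elim: k => //= k ->; by rewrite expnS mul2n addnn. Qed.

Section Gam.
Variable C : numClosedFieldType.

Fixpoint gam (k j : nat) {struct k} : 'M[C]_(dim k) :=
  match k as k0 return 'M[C]_(dim k0) with
  | 0 => 0
  | k'.+1 => if (j < 2 * k')%N then block_mx (gam k' j) 0 0 (- gam k' j)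
             else if j == (2 * k')%N then block_mx 0 1%:M 1%:M 0
             else block_mx 0 (- 'i)%:M 'i%:M 0
  end.

Definition herm d (A : 'M[C]_d) := (map_mx Num.conj A)^T = A.

Lemma gam_herm k j : herm (gam k j).
Proof.
rewrite /herm; elim: k j => [|k IH] j /=; first by rewrite map_mx0 trmx0.
case: ifP => _.
  by rewrite map_block_mx tr_block_mx !map_mx0 !trmx0 map_mxN linearN /= IH.
case: ifP => _.
  by rewrite map_block_mx tr_block_mx !map_mx0 !trmx0 map_scalar_mx tr_scalar_mx ?rmorph1.
rewrite map_block_mx tr_block_mx !map_mx0 !trmx0.
have h2 : Num.conj ('i : C) = - 'i := @conjCi C.
have h1 : Num.conj (- 'i : C) = 'i by move: (raddfN (@Num.conj C) 'i) => /= ->; rewrite h2 opprK.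
congr block_mx; apply/matrixP=> a b; rewrite !mxE ?(eq_sym b a); case: (a == b); rewrite /= ?mulr1n ?mulr0n ?h1 ?h2 ?opprK ?rmorph0 ?oppr0 //.  
Qed.

Lemma gam_tr k j : \tr (gam k j) = 0.
Proof.
case: k => [|k] /=; first by rewrite mxtrace0.
case: ifP => _; first by rewrite mxtrace_block linearN /= subrr.
by case: ifP => _; rewrite mxtrace_block !mxtrace0 addr0.
Qed.

Lemma gamS_lt k j : (j < 2 * k)%N ->
  gam k.+1 j = block_mx (gam k j) 0 0 (- gam k j).
Proof. by move=> /= ->. Qed.
Lemma gamS_X k : gam k.+1 (2 * k) = block_mx 0 1%:M 1%:M 0.
Proof. by rewrite /= ltnn eqxx. Qed.
Lemma gamS_Y k : gam k.+1 (2 * k).+1 = block_mx 0 (- 'i)%:M 'i%:M 0.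
Proof. by rewrite /= ltnNge leqnSn /= (gtn_eqF (ltnSn _)). Qed.

Lemma gam_anti k j l : (j < 2 * k)%N -> (l < 2 * k)%N ->
  gam k j *m gam k l + gam k l *m gam k j = (if j == l then 2%:R else 0)%:M.
Proof.
elim: k j l => [|k IH] j l //= hj hl.
have hj' : (j < 2 * k)%N \/ j = (2 * k)%N \/ j = (2 * k).+1 by lia.
have hl' : (l < 2 * k)%N \/ l = (2 * k)%N \/ l = (2 * k).+1 by lia.
rewrite -/(gam k.+1 j) -/(gam k.+1 l) (scalar_mx_block (dim k) (dim k)).
have sq : 'i * 'i = -1 :> C by rewrite -expr2 sqrCi.
have sD : forall a b : C, a%:M + b%:M = (a+b)%:M :> 'M_(dim k) by move=> a b; rewrite raddfD.
have sZ : 0 = (0 : C)%:M :> 'M_(dim k) by rewrite raddf0.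
case: hj' => [hj2|[->|->]]; case: hl' => [hl2|[->|->]];
  (have e1 : (j == (2*k).+1) = false by lia) || (have e1 : true = true by []);
  (have e2 : ((2*k).+1 == l) = false by lia) || (have e2 : true = true by []);
  rewrite ?(gamS_lt hj2) ?(gamS_lt hl2) ?gamS_X ?gamS_Y !mulmx_block add_block_mx;
  congr block_mx;
  rewrite ?mulmx0 ?mul0mx ?addr0 ?add0r ?mulmxN ?mulNmx ?opprK ?IH //;
  rewrite ?(gtn_eqF hj2) ?(gtn_eqF hl2) ?(ltn_eqF hj2) ?(ltn_eqF hl2) ?eqxx;
  rewrite ?e1 ?e2;
  rewrite ?(ltn_eqF (ltnSn _)) ?(gtn_eqF (ltnSn _)).
all: rewrite ?mul_mx_scalar ?mul_scalar_mx ?scale_scalar_mx ?subrr ?addNr ?raddf0 //.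
all: rewrite ?sD; first [ rewrite [in RHS]sZ; congr (_%:M) | rewrite [in LHS]sZ; congr (_%:M) | congr (_%:M) | idtac ].
all: rewrite ?mul1r ?mulr1 ?mulNr ?mulrN ?sq ?opprK ?subrr ?addNr //.
Qed.
End Gam.

Section H.
Variable C : numClosedFieldType.

Lemma herm_add d (A B : 'M[C]_d) : herm A -> herm B -> herm (A + B).
Proof. by rewrite /herm map_mxD linearD /= => -> ->. Qed.
Lemma herm_scale d a (A : 'M[C]_d) : a^* = a -> herm A -> herm (a *: A).
Proof. by rewrite /herm map_mxZ linearZ /= => -> ->. Qed.
Lemma herm_scalar d a : a^* = a -> herm (a%:M : 'M[C]_d).
Proof.
move=> h; apply/matrixP => i j; rewrite !mxE eq_sym.
by case: (i == j); rewrite ?mulr1n ?mulr0n ?h ?conjC0.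
Qed.
Lemma herm0 d : herm (0 : 'M[C]_d).
Proof. by rewrite /herm map_mx0 trmx0. Qed.
Lemma herm_sum d I (r : seq I) (P : pred I) (F : I -> 'M[C]_d) :
  (forall i, P i -> herm (F i)) -> herm (\sum_(i <- r | P i) F i).
Proof. move=> h; apply: (big_ind (@herm C d)) => //; [exact: herm0|exact: herm_add]. Qed.

Lemma tr_gam2 k j l : (j < 2 * k)%N -> (l < 2 * k)%N ->
  \tr (gam C k j *m gam C k l) = (j == l)%:R *+ dim k.
Proof.
move=> hj hl; have := congr1 mxtrace (gam_anti C hj hl).
rewrite mxtraceD (mxtrace_mulC (gam C k l)) mxtrace_scalar => h.
have h2 : 2%:R * \tr (gam C k j *m gam C k l) = 2%:R * ((j == l)%:R *+ dim k).
  rewrite mulr_natl mulr2n h; case: (j == l) => /=.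
    by rewrite mulrnAr mulr1.
  by rewrite !mul0rn mulr0.
by apply: (mulfI _ h2); rewrite pnatr_eq0.
Qed.

Variables (K m : nat).
Hypothesis hm : (m <= 2 * K)%N.

Definition Am (z : 'I_m -> C) : 'M[C]_(dim K) := \sum_(j < m) z j *: gam C K j.

Lemma hj (j : 'I_m) : (j < 2 * K)%N.
Proof. exact: leq_trans (ltn_ord j) hm. Qed.

Lemma Am_mul z z' : Am z *m Am z' =
  \sum_(j < m) \sum_(l < m) (z j * z' l) *: (gam C K j *m gam C K l).
Proof.
rewrite /Am mulmx_suml; apply: eq_bigr => j _.
rewrite mulmx_sumr; apply: eq_bigr => l _.
by rewrite -scalemxAl -scalemxAr scalerA.
Qed.

Lemma Am_sq z : Am z *m Am z = (\sum_(j < m) z j ^+ 2)%:M.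
Proof.
set S := Am z *m Am z.
have e1 : S = \sum_(j < m) \sum_(l < m) (z j * z l) *: (gam C K l *m gam C K j).
  rewrite /S Am_mul exchange_big /=; apply: eq_bigr => j _; apply: eq_bigr => l _.
  by rewrite mulrC.
have e2 : S + S = \sum_(j < m) (2%:R * z j ^+ 2)%:M.
  rewrite {1}/S Am_mul {1}e1 -big_split /=; apply: eq_bigr => j _.
  rewrite -big_split /= (bigD1 j) //= big1.
    by rewrite -scalerDr gam_anti ?hj // eqxx addr0 scale_scalar_mx mulrC expr2.
  move=> l hl; rewrite eq_sym in hl; rewrite -scalerDr gam_anti ?hj //.
  case: eqP => [/val_inj e|_]; first by rewrite e eqxx in hl.
  by rewrite scale_scalar_mx mulr0 raddf0.
have e3 : (2%:R : C) *: S = 2%:R *: (\sum_(j < m) z j ^+ 2)%:M.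
  rewrite scaler_nat mulr2n e2 scale_scalar_mx mulr_sumr.
  by rewrite (raddf_sum (@scalar_mx C (dim K))).
by apply: (scalerI _ e3); rewrite pnatr_eq0.
Qed.

Lemma tr_Am z : \tr (Am z) = 0.
Proof.
rewrite /Am raddf_sum big1 // => j _; apply: etrans (mxtraceZ _ _) _; by rewrite gam_tr mulr0.
Qed.

Lemma tr_N c z c' z' :
  \tr ((c%:M + Am z) *m (c'%:M + Am z')) =
  (c * c' + \sum_(j < m) z j * z' j) *+ dim K.
Proof.
rewrite mulmxDl !mulmxDr !mxtraceD -scalar_mxM mxtrace_scalar.
rewrite mul_scalar_mx mul_mx_scalar !mxtraceZ !tr_Am !mulr0 !addr0 add0r.
rewrite Am_mul raddf_sum mulrnDl; congr (_ + _).
rewrite -sumrMnl; apply: eq_bigr => j _.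
rewrite raddf_sum (bigD1 j) //= big1 ?addr0.
  by rewrite mxtraceZ tr_gam2 ?hj // eqxx mulrnAr mulr1.
move=> l hl; rewrite mxtraceZ tr_gam2 ?hj //; case: eqP => [/val_inj e|_]; first by rewrite e eqxx in hl.
by rewrite mul0rn mulr0.
Qed.

Definition Nm c z : 'M[C]_(dim K) := c%:M + Am z.

Lemma Nm_herm c z : c^* = c -> (forall j, (z j)^* = z j) -> herm (Nm c z).
Proof.
move=> hc hz; apply: herm_add; first exact: herm_scalar.
apply: herm_sum => j _; apply: herm_scale => //; exact: gam_herm.
Qed.

Lemma nrm_ge0 d (w : 'cV[C]_d) : 0 <= ((map_mx Num.conj w)^T *m w) 0 0.
Proof.
rewrite mxE; apply: sumr_ge0 => i _; rewrite !mxE mulrC; exact: mul_conjC_ge0.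
Qed.

Lemma herm_qf d (N : 'M[C]_d) (v : 'cV_d) : herm N ->
  (map_mx Num.conj v)^T *m N = (map_mx Num.conj (N *m v))^T.
Proof. by move=> h; rewrite map_mxM trmx_mul h. Qed.

Lemma Nm_psd (c : C) z (v : 'cV[C]_(dim K)) : 0 <= c -> (forall j, (z j)^* = z j) ->
  \sum_(j < m) z j ^+ 2 <= c ^+ 2 ->
  0 <= ((map_mx Num.conj v)^T *m Nm c z *m v) 0 0.
Proof.
move=> c0 hz hS.
have hc : c^* = c by exact: geC0_conj.
have zsq : forall j, 0 <= z j ^+ 2 by move=> j; rewrite expr2 -{2}hz; exact: mul_conjC_ge0.
have [c_eq0|c_neq0] := eqVneq c 0.
  have zj0 : forall j, z j = 0.
    move=> j; suff : z j ^+ 2 == 0 by rewrite expf_eq0 /= => /eqP.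
    have := @psumr_eq0P _ _ predT (fun j => z j ^+ 2) (fun j _ => zsq j).
    move=> h; apply/eqP; apply: h => //.
    apply/le_anti; apply/andP; split; last by apply: sumr_ge0 => i _; exact: zsq.
    by move: hS; rewrite c_eq0 expr0n.
  rewrite /Nm /Am c_eq0 big1 ?raddf0 ?addr0 ?mulmx0 ?mul0mx ?mxE //.
  by move=> j _; rewrite zj0 scale0r.
have cpos : 0 < c by rewrite lt_def c_neq0 c0.
set N := Nm c z; set S := \sum_(j < m) z j ^+ 2.
have key : N *m N + (c^+2 - S)%:M = (2%:R * c) *: N.
  rewrite /N /Nm mulmxDl !mulmxDr Am_sq -scalar_mxM mul_scalar_mx mul_mx_scalar.
  apply/matrixP=> i j; rewrite !mxE; case: (i == j) => /=; rewrite ?mulr1n ?mulr0n -/S; ring.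
set u := (map_mx Num.conj v)^T.
have hN : herm N by apply: Nm_herm.
have e : ((2%:R * c) * (u *m N *m v) 0 0) =
   ((map_mx Num.conj (N *m v))^T *m (N *m v)) 0 0 +
   (c^+2 - S) * (u *m v) 0 0.
  have e1 : u *m ((2%:R * c) *: N) *m v = (2%:R * c) *: (u *m N *m v).
    by rewrite -scalemxAr -scalemxAl.
  have e2 : u *m (N *m N + (c^+2 - S)%:M) *m v =
     (map_mx Num.conj (N *m v))^T *m (N *m v) + (c^+2 - S) *: (u *m v).
    rewrite mulmxDr mulmxDl mul_mx_scalar -scalemxAl; congr (_ + _).
    by rewrite /u mulmxA herm_qf // -mulmxA.
  have := congr1 (fun M : 'M_1 => M 0 0) e2; rewrite key e1 /= => h.
  transitivity (((2%:R * c) *: (u *m N *m v)) 0 0); first by rewrite [RHS]mxE.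
  by rewrite h !mxE.
have : 0 <= (2%:R * c) * (u *m N *m v) 0 0.
  rewrite e; apply: addr_ge0; first exact: nrm_ge0.
  apply: mulr_ge0; last exact: nrm_ge0.
  by rewrite subr_ge0.
by rewrite pmulr_rge0 // mulr_gt0 // ltr0n.
Qed.

End H.

Section Red.
Variable R : rcfType.

Lemma sqsum_eq0 (I : finType) (F : I -> R) : \sum_i F i ^+ 2 = 0 -> forall i, F i = 0.
Proof.
move=> h i; have := @psumr_eq0P _ _ predT (fun i => F i ^+ 2) (fun i _ => sqr_ge0 (F i)) h i isT.
by move/eqP; rewrite expf_eq0 /= => /eqP.
Qed.

Lemma dotE n (u v : 'rV[R]_n) : (u *m v^T) 0 0 = \sum_i u 0 i * v 0 i.
Proof. by rewrite mxE; apply: eq_bigr => i _; rewrite mxE. Qed.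

Lemma self_dot0 n (u : 'rV[R]_n) : (u *m u^T) 0 0 = 0 -> u = 0.
Proof.
rewrite dotE => h; have h' : \sum_i u 0 i ^+ 2 = 0 by rewrite -[RHS]h; apply: eq_bigr => i _; rewrite expr2.
apply/matrixP => i j; rewrite ord1 mxE; exact: sqsum_eq0 h' j.
Qed.

Lemma self_dot_ge0 n (u : 'rV[R]_n) : 0 <= (u *m u^T) 0 0.
Proof. rewrite dotE; apply: sumr_ge0 => i _; rewrite -expr2; exact: sqr_ge0. Qed.

Lemma colsplit n k (A : 'M[R]_(n, k.+1)) :
  A *m A^T = col' ord_max A *m (col' ord_max A)^T + col ord_max A *m (col ord_max A)^T.
Proof.
apply/matrixP => i j; rewrite !mxE big_ord_recr /=; congr (_ + _).
  apply: eq_bigr => b _; rewrite !mxE; congr (A _ _ * A _ _); apply: val_inj; by rewrite /= /bump leqNgt ltn_ord.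
by rewrite big_ord1 !mxE.
Qed.

Lemma mx11E (M : 'M[R]_1) : M = (M 0 0)%:M.
Proof. exact: mx11_scalar. Qed.


Lemma step n k (Y : 'M[R]_(n, k.+1)) : (\rank Y < k.+1)%N ->
  exists Y2 : 'M[R]_(n, k.+1),
    [/\ Y2 *m Y2^T = Y *m Y^T, (\rank Y2 <= \rank Y)%N & col ord_max Y2 = 0].
Proof.
move=> hr.
have : kermx Y^T != 0.
  by rewrite -mxrank_eq0 mxrank_ker mxrank_tr -lt0n subn_gt0.
case/rowV0Pn => v vK vnz.
have Yv : Y *m v^T = 0.
  by rewrite -(trmxK Y) -trmx_mul; apply/eqP; rewrite trmx_eq0; apply/eqP/sub_kermxP.
set q := (v *m v^T) 0 0.
have q0 : 0 < q.
  rewrite lt_def self_dot_ge0 andbT; apply: contra vnz => /eqP h.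
  by apply/eqP; apply: self_dot0.
set a := (Num.sqrt q)^-1.
have aq : a * a * q = 1.
  by rewrite -expr2 exprVn sqr_sqrtr ?ltW // mulVf // gt_eqF.
set e : 'rV[R]_(k.+1) := delta_mx 0 ord_max.
have colM : forall M : 'M[R]_(n, k.+1), col ord_max M = M *m e^T.
  by move=> M; rewrite colE /e trmx_delta.
set w := e - a *: v.
set s := (w *m w^T) 0 0.
have [s0|s0] := eqVneq s 0.
  have w0 : w = 0 by apply: self_dot0.
  exists Y; split => //.
  have : e = a *: v by apply/eqP; rewrite -subr_eq0 -/w w0.
  by rewrite colM => ->; rewrite linearZ /= -scalemxAr Yv scaler0.
set W := w^T *m w.
set c := 2%:R / s.
set H : 'M[R]_(k.+1) := 1%:M - c *: W.
have ww : w *m w^T = s%:M by apply: mx11E.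
have WW : W *m W = s *: W by rewrite /W mulmxA -(mulmxA _ w) ww mul_mx_scalar -scalemxAl.
have HT : H^T = H by rewrite /H linearB linearZ /= trmx1 /W trmx_mul trmxK.
have HH : H *m H = 1%:M.
  rewrite /H mulmxBl mulmxBr !mul1mx mulmxBr mulmx1 -scalemxAl -scalemxAr WW !scalerA.
  have -> : c * c * s = c + c by rewrite /c; field.
  by rewrite scalerDl opprB addrK subrK.
exists (Y *m H); split.
- by rewrite trmx_mul HT mulmxA -(mulmxA Y) HH mulmx1.
- exact: mxrankM_maxl.
set t := (w *m e^T) 0 0.
have ee : (e *m e^T) 0 0 = 1.
  rewrite dotE (bigD1 ord_max) //= big1 ?addr0 /e ?mxE ?eqxx ?mulr1 //.
  by move=> i hi; rewrite !mxE (negbTE hi) andbF mulr0.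
have ve : (e *m v^T) 0 0 = (v *m e^T) 0 0.
  by rewrite !dotE; apply: eq_bigr => i _; rewrite mulrC.
have st : s = 2%:R * t.
  have wT : w^T = e^T - a *: v^T by rewrite /w linearB linearZ.
  rewrite /s /t wT /w !mulmxBl !mulmxBr -!scalemxAl -!scalemxAr scalerA.
  move: ee ve aq; rewrite -/q.
  set EE := e *m e^T; set EV := e *m v^T; set VE := v *m e^T; set VV := v *m v^T.
  have hq : VV 0 0 = q by []. clearbody EE EV VE VV.
  move=> ee ve aq; rewrite !mxE ee ve hq.
  rewrite aq; move: (VE 0 0) => x; clear; ring.
have He : H *m e^T = a *: v^T.
  rewrite /H mulmxBl mul1mx -scalemxAl /W -mulmxA (mx11E (w *m e^T)) -/t mul_mx_scalar scalerA.
  have -> : c * t = 1 by rewrite /c st; field; apply/eqP => h; move: s0; rewrite st h mulr0 eqxx.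
  by rewrite scale1r /w linearB linearZ /= opprB addrC subrK.
by rewrite colM -mulmxA He -scalemxAr Yv scaler0.
Qed.

Lemma rank_col' n k (Y : 'M[R]_(n, k.+1)) : (\rank (col' ord_max Y) <= \rank Y)%N.
Proof.
rewrite -mxrank_tr tr_col' -(mxrank_tr Y); apply: mxrankS; exact: rowsub_sub.
Qed.

Lemma reduce n k (Y : 'M[R]_(n, k)) :
  exists m (Z : 'M[R]_(n, m)), (m <= \rank Y)%N /\ Z *m Z^T = Y *m Y^T.
Proof.
elim: k Y => [|k IH] Y; first by exists 0%N, Y.
have [hr|hr] := ltnP (\rank Y) k.+1; last first.
  by exists k.+1, Y; split.
have [Y2 [e1 e2 e3]] := step hr.
have [m [Z [hm hZ]]] := IH (col' ord_max Y2).
exists m, Z; split.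
  by apply: leq_trans hm (leq_trans (rank_col' Y2) e2).
by rewrite hZ -e1 (colsplit Y2) e3 mul0mx addr0.
Qed.

Lemma rank_gram n p (A : 'M[R]_(n, p)) : (\rank A <= \rank (A *m A^T))%N.
Proof.
have sub : (kermx (A *m A^T) <= kermx A)%MS.
  apply/row_subP => i; set r := row i _.
  have h : r *m (A *m A^T) = 0 by apply/sub_kermxP; exact: row_sub.
  apply/sub_kermxP; apply: self_dot0.
  by rewrite trmx_mul mulmxA -(mulmxA r) h mxE big1 // => j _; rewrite mxE mul0r.
have := mxrankS sub; rewrite !mxrank_ker.
have := rank_leq_row A; have := rank_leq_row (A *m A^T); lia.
Qed.

End Red.

Lemma conjR (R : realType) (x : R) : Num.conj (x%:C)%C = (x%:C)%C.
Proof. apply: conj_Creal; apply/complex_realP; by exists x. Qed.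

Unset Implicit Arguments.

Theorem theorem4p8 (R : realType) (n : nat) (X : 'M[R]_n) :
  gram_lorentz X ->
  cpsd X /\
  exists d : nat,
    (1 <= d)%N /\ (d <= 2 ^ ((\rank X + 1) %/ 2))%N /\ cpsd_factorization X d.
Proof.
case=> k [l [hl hX]].
set L : 'M[R]_(n, 1 + k) := \matrix_(i, j) l i 0 j.
have XL : X = L *m L^T.
  apply/matrixP => i j; rewrite hX /rdot !mxE; apply: eq_bigr => b _; by rewrite !mxE.
set Y := rsubmx L.
have [m [Z [hm hZ]]] := reduce Y.
have rYL : (\rank Y <= \rank L)%N.
  have -> : Y = L *m col_mx 0 1%:M.
    by rewrite -{1}(hsubmxK L) mul_row_col mulmx0 add0r mulmx1.
  exact: mxrankM_maxl.
have rLX : (\rank L <= \rank X)%N by rewrite XL; exact: rank_gram.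
set K := ((\rank X + 1) %/ 2)%N.
have hmK : (m <= 2 * K)%N.
  have h1 := divn_eq (\rank X + 1) 2; have h2 := ltn_pmod (\rank X + 1) (isT : (0 < 2)%N).
  rewrite /K; move: h1 h2; set q := ((_ + 1) %/ 2)%N; set rr := ((_ + 1) %% 2)%N; clearbody q rr => h1 h2.
  apply: leq_trans hm _; apply: leq_trans rYL _; apply: leq_trans rLX _.
  move: h1 h2; move: (\rank X) => r; lia.
set c : 'I_n -> R := fun i => lsubmx L i ord0.
have LL : forall i j, X i j = c i * c j + (Z *m Z^T) i j.
  have LT : L *m L^T = lsubmx L *m (lsubmx L)^T + rsubmx L *m (rsubmx L)^T.
    by rewrite -[in LHS](hsubmxK L) tr_row_mx mul_row_col.
  move=> i j; rewrite XL hZ LT mxE; congr (_ + _).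
  by rewrite mxE big_ord1 [(lsubmx L)^T _ _]mxE.
have cE : forall i, c i = (lsubmx (l i)) 0 0 by move=> i; rewrite /c !mxE.
have ZE : forall i, (Z *m Z^T) i i = \sum_(j < k) (rsubmx (l i)) 0 j ^+ 2.
  move=> i; rewrite hZ mxE; apply: eq_bigr => j _; by rewrite !mxE expr2.
have c0 : forall i, 0 <= c i.
  move=> i; rewrite cE; apply: le_trans (hl i); exact: sqrtr_ge0.
have hS : forall i, \sum_(j < m) Z i j ^+ 2 <= c i ^+ 2.
  move=> i; have h := hl i; rewrite /in_lorentz -cE -ZE in h.
  have h2 : (Z *m Z^T) i i <= c i ^+ 2.
    by rewrite -ler_sqrt ?sqr_ge0 // sqrtr_sqr ger0_norm.
  apply: le_trans h2; rewrite mxE le_eqVlt; apply/orP; left; apply/eqP.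
  by apply: eq_bigr => b _; rewrite mxE expr2.
set d := dim K.
have d0 : (0 < d)%N by rewrite /d dimE expn_gt0.
set s : R[i] := sqrtC ((d%:R : R[i])^-1).
have s_ge0 : 0 <= s by rewrite sqrtC_ge0 invr_ge0 ler0n.
have ss : s * s = (d%:R)^-1 by rewrite -expr2 sqrtCK.
set P : 'I_n -> 'M[R[i]]_d := fun i =>
  s *: @Nm R[i] K m ((c i)%:C)%C (fun j => ((Z i j)%:C)%C).
have fact : cpsd_factorization X d.
  exists P; split.
    move=> i; split.
      apply: herm_scale; first exact: geC0_conj.
      by apply: Nm_herm => [|j]; rewrite conjR.
    move=> v.
    rewrite /P -scalemxAr -scalemxAl mxE; apply: mulr_ge0 => //.
    apply: Nm_psd => //; first by rewrite ler0c.
      by move=> j; rewrite conjR.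
    have e : forall x : R, ((x%:C) ^+ 2 = (x ^+ 2)%:C)%C by move=> x; rewrite rmorphXn.
    have es : forall F : 'I_m -> R, (\sum_j (F j)%:C = (\sum_j F j)%:C)%C.
      by move=> F; rewrite rmorph_sum.
    under eq_bigr do rewrite e.
    by rewrite es e lecR.
  move=> i j; rewrite /P -scalemxAr -scalemxAl linearZ /= linearZ /= tr_N //.
  rewrite mulrA ss mulrC -[_ *+ dim K]mulr_natr mulfK; last by rewrite pnatr_eq0 -lt0n.
  rewrite LL rmorphD rmorphM /= mxE rmorph_sum; congr (_ + _).
  by apply: eq_bigr => b _; rewrite !mxE rmorphM.
split; first by exists d.
by exists d; split => //; split => //; rewrite /d dimE.
Qed.
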